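(* Let $G$ be a finite nilpotent group and $H$ an arbitrary finite group. If $P_e(G)\cong P_e(H)$, then $H$ is nilpotent.
   Context: All groups are finite. For a group $X$, the enhanced power graph $P_e(X)$ is the simple graph with vertex set $X$ in which two distinct vertices $x,y$ are adjacent if and only if the subgroup $\langle x,y\rangle$ is cyclic. *)

(* Defs.v *)
From mathcomp Require Import all_boot all_fingroup all_solvable.
Set Implicit Arguments. Unset Strict Implicit. Unset Printing Implicit Defensive.
Local Open Scope group_scope.

(* Adjacency in the enhanced power graph P_e(X) of a finite group X
   (vertex set = all elements of X, i.e. of the finGroupType gT):
   distinct x, y are adjacent iff <x, y> is cyclic. *)
Definition epg_adj (gT : finGroupType) (x y : gT) : bool :=
  (x != y) && cyclic <<[set x; y]>>.

Definition epg_isomorphic (gT hT : finGroupType) : Prop :=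
  exists f : gT -> hT, bijective f /\
    forall x y : gT, epg_adj x y = epg_adj (f x) (f y).

(* Main.v *)
Require Import Defs.
From mathcomp Require Import all_boot all_fingroup all_solvable.
Set Implicit Arguments. Unset Strict Implicit. Unset Printing Implicit Defensive.
Local Open Scope group_scope.

Lemma closure_count (T : finType) (C : T -> {set T}) (P1 P2 : pred T) :
  (forall x, x \in C x) -> (forall x y, y \in C x -> C y \subset C x) ->
  (forall x, #|[set y in C x | P1 y]| = #|[set y in C x | P2 y]|) ->
  #|[set y | P1 y]| = #|[set y | P2 y]|.
Proof.
move=> hC hT hP.
pose cnt (P : pred T) (K : {set T}) := #|[set y | P y && (C y == K)]|.
have part : forall (P : pred T) (S : {set {set T}}),
    (forall y, P y -> C y \in S) -> #|[set y | P y]| = \sum_(K in S) cnt P K.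
  move=> P S hS; rewrite cardsE -sum1_card (partition_big C (mem S)) /=; last first.
    by move=> y; apply: hS.
  apply: eq_bigr => K _; rewrite /cnt cardsE -sum1_card; apply: eq_bigl => y.
  by [].
have eqA : forall (P : pred T) x, #|[set y in C x | P y]| =
    cnt P (C x) + \sum_(K in [set C z | z in C x] | K != C x) cnt P K.
  move=> P x.
  rewrite (part _ [set C z | z in C x]); last first.
    by move=> y /andP[yC _]; apply: imset_f.
  rewrite (bigD1 (C x)) /=; last by apply: imset_f.
  congr (_ + _).
    by rewrite /cnt; apply: eq_card => y; rewrite !inE; case: eqP => [<-|]; rewrite ?hC ?andbF ?andbT.
  apply: eq_bigr => K /andP[/imsetP[z zC ->] _]; rewrite /cnt; apply: eq_card => y.
  rewrite !inE; case: eqP => [Cyz|]; last by rewrite !andbF.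
  by rewrite (subsetP (hT _ _ zC)) // -Cyz hC.
have key : forall n x, #|C x| <= n -> cnt P1 (C x) = cnt P2 (C x).
  elim=> [|n IH] x hx.
    by move: hx; rewrite leqn0 => /eqP/cards0_eq h; move: (hC x); rewrite h inE.
  have := eqA P1 x; rewrite hP eqA => /eqP.
  suff -> : \sum_(K in [set C z | z in C x] | K != C x) cnt P2 K =
            \sum_(K in [set C z | z in C x] | K != C x) cnt P1 K.
    by rewrite eqn_add2r => /eqP.
  apply: eq_bigr => K /andP[/imsetP[z zC ->] ne]; apply: esym; apply: IH.
  have pr : C z \proper C x by rewrite properEneq ne hT.
  by rewrite -ltnS (leq_trans (proper_card pr)).
rewrite (part P1 [set C z | z : T]); last by move=> y _; apply: imset_f.
rewrite (part P2 [set C z | z : T]); last by move=> y _; apply: imset_f.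
by apply: eq_bigr => K /imsetP[z _ ->]; apply: (key #|C z|).
Qed.

Section Grp.
Variable gT : finGroupType.
Implicit Types x y z : gT.

Definition Nb x : {set gT} := [set z | cyclic <<[set x; z]>>].
Definition Cl x : {set gT} := [set y | Nb x \subset Nb y].
Definition cycP : pred {group gT} := fun H => cyclic H.

Lemma max_exists x z : cyclic <<[set x; z]>> ->
  {M : {group gT} | maxgroup M cycP & (x \in M) && (z \in M)}.
Proof.
move=> cxz; have [M maxM sM] := @maxgroup_exists _ cycP <<[set x; z]>>%G cxz.
exists M => //; apply/andP; split; apply: (subsetP sM); apply: mem_gen;
  by rewrite !inE eqxx ?orbT.
Qed.

Lemma Cl_max (M : {group gT}) x y : maxgroup M cycP -> x \in M -> y \in Cl x -> y \in M.
Proof.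
move=> maxM xM; rewrite inE => /subsetP sN.
have /maxgroupP[cM maxM'] := maxM.
have /cyclicP[m defM] : cyclic M by [].
have mN : m \in Nb x.
  rewrite inE; suff -> : <<[set x; m]>> = M by [].
  apply/eqP; rewrite eqEsubset gen_subG subUset !sub1set xM defM cycle_id /=.
  by rewrite cycle_subG mem_gen // !inE eqxx orbT.
have := sN _ mN; rewrite inE => cym.
have := maxM' <<[set y; m]>>%G cym; rewrite defM cycle_subG mem_gen ?inE ?eqxx ?orbT //.
move=> /(_ isT) => eqK; rewrite -eqK mem_gen // !inE eqxx //.
Qed.

Lemma Cl_maxI x y : (forall M : {group gT}, maxgroup M cycP -> x \in M -> y \in M) -> y \in Cl x.
Proof.
move=> h; rewrite inE; apply/subsetP => z; rewrite !inE => cxz.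
have [M maxM /andP[xM zM]] := max_exists cxz.
apply: cyclicS (maxgroupp maxM); rewrite gen_subG subUset !sub1set zM andbT.
exact: h.
Qed.

Lemma Cl_group_set x : group_set (Cl x).
Proof.
apply/group_setP; split.
  by apply: Cl_maxI => M _ _; apply: group1.
move=> y1 y2 h1 h2; apply: Cl_maxI => M maxM xM.
by rewrite groupM // (Cl_max maxM xM).
Qed.

Lemma Cl_cyclic x : cyclic (Cl x).
Proof.
have cx : cyclic <<[set x; x]>> by rewrite setUid; apply: cycle_cyclic.
have [M maxM /andP[xM _]] := max_exists cx.
have <- : gval (Group (Cl_group_set x)) = Cl x by []. apply: cyclicS (maxgroupp maxM); apply/subsetP => y; exact: Cl_max maxM xM.
Qed.

Lemma card_pelt (K : {group gT}) p : nilpotent K ->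
  #|[set y in K | p.-elt y]| = (#|K|`_p)%N.
Proof.
move=> nilK; have hall := nilpotent_pcore_Hall p nilK.
rewrite -(card_Hall hall); apply: eq_card => y; rewrite inE.
case yK: (y \in K); first by rewrite (mem_normal_Hall hall (pcore_normal _ _) yK).
by apply/esym/negbTE; apply: contraFN yK; apply: (subsetP (pcore_sub _ _)).
Qed.

End Grp.

Lemma nil_of_count (hT : finGroupType) :
  (forall p, prime p -> #|[set y : hT | p.-elt y]| = (#|[set: hT]|`_p)%N) ->
  nilpotent [set: hT].
Proof.
move=> hc.
have sylF : forall p, prime p -> exists P : {group hT}, p.-Sylow([set: hT]) P /\ P \subset 'F([set: hT]).
  move=> p pr; have [P sylP] := Sylow_exists p [set: hT]%G.
  exists P; split => //.
  have pP := pHall_pgroup sylP.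
  have eqS : forall Q : {group hT}, p.-group Q -> #|Q| = #|P| -> (Q : {set hT}) = [set y | p.-elt y].
    move=> Q pQ cQ; apply/eqP; rewrite eqEcard; apply/andP; split.
      by apply/subsetP => y yQ; rewrite inE (mem_p_elt pQ yQ).
    rewrite hc // -(card_Hall sylP) /=; move: cQ => <-; by [].
  have nP : P <| [set: hT].
    rewrite /normal subsetT /=; apply/normsP => h _.
    rewrite -[P :^ h]/(gval (P :^ h)%G) (eqS (P :^ h)%G) ?pgroupJ ?cardJg //.
    by rewrite (eqS P).
  exact: Fitting_max nP (pgroup_nil pP).
have FT : 'F([set: hT]) = [set: hT].
  apply: index1g; first exact: subsetT.
  apply/eqP; apply/negPn/negP => ne1.
  have gt1 : 1 < #|[set: hT] : 'F([set: hT])|.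
    by rewrite ltn_neqAle eq_sym ne1 indexg_gt0.
  have pr := pdiv_prime gt1.
  have [P [sylP sPF]] := sylF _ pr.
  have := Lagrange_index (subsetT 'F([set: hT])) sPF.
  case/and3P: sylP => _ _; rewrite p'natE // => ndvd eq.
  move: ndvd; rewrite -eq dvdn_mulr //; exact: pdiv_dvd.
by rewrite -FT; apply: Fitting_nil.
Qed.

Section Transport.
Variables gT hT : finGroupType.
Variable f : gT -> hT.
Hypothesis fbij : bijective f.
Hypothesis hadj : forall x y : gT, epg_adj x y = epg_adj (f x) (f y).

Lemma Nb_eq (kT : finGroupType) (x y : kT) : (y \in Nb x) = (x == y) || epg_adj x y.
Proof.
rewrite inE /epg_adj; case: eqP => [->|] //=.
by rewrite setUid; apply: cycle_cyclic.
Qed.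

Lemma Nb_f x y : (f y \in Nb (f x)) = (y \in Nb x).
Proof. by rewrite !Nb_eq -hadj (inj_eq (bij_inj fbij)). Qed.

Lemma Cl_f x y : (f y \in Cl (f x)) = (y \in Cl x).
Proof.
have [g fg gf] := fbij.
rewrite !inE; apply/subsetP/subsetP => h z.
  by rewrite -(Nb_f x z) -(Nb_f y z); apply: h.
by rewrite -(gf z) !Nb_f; apply: h.
Qed.

Lemma imset_Cl x : f @: Cl x = Cl (f x).
Proof.
have [g fg gf] := fbij.
apply/setP => y; rewrite -(gf y) (mem_imset _ _ (bij_inj fbij)) Cl_f.
by [].
Qed.

Lemma count_eq p :
  #|[set y : hT | p.-elt y]| = #|[set y : gT | p.-elt y]|.
Proof.
have [g fg gf] := fbij.
have finj := bij_inj fbij.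
have -> : [set y : hT | p.-elt y] = f @: [set y : gT | p.-elt (f y)].
  apply/setP => y; rewrite -(gf y) (mem_imset _ _ finj) !inE.
  by [].
rewrite (card_imset _ finj); symmetry.
apply: (closure_count (C := @Cl gT)).
- by move=> x; rewrite inE subxx.
- move=> x y; rewrite inE => sxy; apply/subsetP => z; rewrite !inE.
  exact: subset_trans.
- move=> x.
  have nilC : forall (kT : finGroupType) (z : kT), nilpotent (Group (Cl_group_set z)).
    by move=> kT z; apply/abelian_nil/cyclic_abelian/Cl_cyclic.
  have e1 := card_pelt p (nilC _ x); rewrite /= in e1; rewrite e1.
  have e2 := card_pelt p (nilC _ (f x)); rewrite /= in e2.
  have -> : [set y in Cl x | p.-elt (f y)] = g @: [set y in Cl (f x) | p.-elt y].
    apply/setP => y; rewrite inE; apply/andP/imsetP => [[yC py]|[z]].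
      exists (f y); last by rewrite fg.
      by rewrite inE Cl_f yC py.
    by rewrite inE => /andP[zC pz] ->; rewrite -Cl_f !gf zC pz.
  rewrite (card_imset _ (can_inj gf)) e2 -imset_Cl (card_imset _ finj).
  by [].
Qed.

End Transport.

Theorem lemma1 (gT hT : finGroupType) :
  nilpotent [set: gT] -> epg_isomorphic gT hT -> nilpotent [set: hT].
Proof.
move=> nilG [f [fbij hadj]].
apply: nil_of_count => p pr.
rewrite (count_eq fbij hadj p).
have -> : #|[set: hT]| = #|[set: gT]|.
  have <- : f @: [set: gT] = [set: hT].
    have [g fg gf] := fbij.
    by apply/setP => y; rewrite -(gf y) (mem_imset _ _ (bij_inj fbij)) !inE.
  by rewrite (card_imset _ (bij_inj fbij)).
have := card_pelt p nilG.
have -> : [set y in [set: gT] | p.-elt y] = [set y | p.-elt y].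
  by apply/setP => y; rewrite !inE.
by [].
Qed.
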